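(* Let $G$ be a torsion-free group acting $\kappa$-acylindrically on a simplicial tree $T$, let $X$ be a graph with an isometric $G$-action, and let $\pi:X\to T$ be a $G$-equivariant $1$-Lipschitz map. Let $g,h\in G$ be loxodromic for the action on $T$, with axes $\alpha_g,\alpha_h$, and suppose $g$ and $h$ have no common nontrivial power. Choose a vertex $x_0\in\pi^{-1}(\alpha_g)$ with $d_X(gx_0,x_0)=\min\{d_X(gx,x): x\in\pi^{-1}(\alpha_g)\}$, choose a vertex $y_0\in\pi^{-1}(\alpha_h)$, and set $A(g)=\{g^nx_0\}_{n\in\mathbf{Z}}$ and $A(h)=\{h^ny_0\}_{n\in\mathbf{Z}}$. Then for each $\epsilon>0$ there is a constant $K$, depending only on $\epsilon$, $\kappa$ and the conjugacy classes of $g$ and $h$, such that $\mathrm{diam}_X(N_\epsilon(A(g))\cap A(h))\le K$.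
   Context: An action on a simplicial tree is $\kappa$-acylindrical if the pointwise stabiliser of every edge path of length at least $\kappa+1$ is trivial. The axis $\alpha_g$ of a loxodromic $g$ is its invariant bi-infinite geodesic. $N_\epsilon(\cdot)$ denotes the closed $\epsilon$-neighbourhood in $X$. Common nontrivial power: $g^m=h^n\neq1$ for some integers $m,n$. *)

(* Defs.v *)
From Stdlib Require Import Reals ZArith Lia ClassicalEpsilon.
Open Scope R_scope.
Set Implicit Arguments.

Record Group := {
  gcar :> Type;
  gmul : gcar -> gcar -> gcar;
  gone : gcar;
  ginv : gcar -> gcar;
  gmulA : forall a b c, gmul a (gmul b c) = gmul (gmul a b) c;
  gmul1l : forall a, gmul gone a = a;
  gmulVl : forall a, gmul (ginv a) a = gone }.

Arguments gmul {_} _ _.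
Arguments gone {_}.
Arguments ginv {_} _.

Fixpoint gnpow (G : Group) (g : G) (n : nat) : G :=
  match n with O => gone | S k => gmul g (gnpow G g k) end.

Arguments gnpow {G} _ _.

Definition gpow (G : Group) (g : G) (n : Z) : G :=
  match n with
  | Z0 => gone
  | Zpos p => gnpow g (Pos.to_nat p)
  | Zneg p => ginv (gnpow g (Pos.to_nat p))
  end.

Arguments gpow {G} _ _.

Definition conj (G : Group) (a g : G) : G := gmul (gmul a g) (ginv a).

Arguments conj {G} _ _.

Definition torsion_free (G : Group) : Prop :=
  forall (g : G) (n : nat), (1 <= n)%nat -> gnpow g n = gone -> g = gone.

Definition common_nontrivial_power (G : Group) (g h : G) : Prop :=
  exists m n : Z, gpow g m = gpow h n /\ gpow g m <> gone.

Arguments common_nontrivial_power {G} _ _.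

Record action (G : Group) (V : Type) := {
  act :> G -> V -> V;
  act1 : forall v, act gone v = v;
  actM : forall a b v, act (gmul a b) v = act a (act b v) }.

Arguments act {G V} _ _ _.

Record graph := {
  vert :> Type;
  adj : vert -> vert -> Prop;
  adj_sym : forall x y, adj x y -> adj y x }.

Arguments adj {g} _ _.

Definition walk (V : Type) (e : V -> V -> Prop) (n : nat) (x y : V) : Prop :=
  exists p : nat -> V, p O = x /\ p n = y /\
    forall i, (i < n)%nat -> e (p i) (p (S i)).

Arguments walk {V} _ _ _ _.

Definition connected (V : Type) (e : V -> V -> Prop) : Prop :=
  forall x y : V, exists n, walk e n x y.

Arguments connected {V} _.

(** combinatorial distance: least number of edges of a walk (used only
    on connected graphs) *)
Definition gdist (V : Type) (e : V -> V -> Prop) (x y : V) : nat :=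
  epsilon (inhabits O)
    (fun n => walk e n x y /\ forall m, walk e m x y -> (n <= m)%nat).

Arguments gdist {V} _ _ _.

(** reduced (= geodesic, in a tree) edge path with n edges *)
Definition rpath (V : Type) (e : V -> V -> Prop) (n : nat) (p : nat -> V) : Prop :=
  (forall i, (i < n)%nat -> e (p i) (p (S i))) /\
  (forall i, (S (S i) <= n)%nat -> p i <> p (S (S i))).

Arguments rpath {V} _ _ _.

Record tree := {
  tv :> Type;
  tadj : tv -> tv -> Prop;
  tadj_sym : forall x y, tadj x y -> tadj y x;
  tconn : connected tadj;
  tacyc : forall n p, (1 <= n)%nat -> rpath tadj n p -> p O <> p n }.

Arguments tadj {t} _ _.

Definition dT (T : tree) (u v : T) : nat := gdist (@tadj T) u v.

(** Points of the geometric realization of T: a vertex, or the point of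
    the edge [u,v] at distance t from u (0<t<1). *)
Inductive TPt (V : Type) : Type :=
| TV : V -> TPt V
| TE : V -> V -> R -> TPt V.
Arguments TV {V} _.
Arguments TE {V} _ _ _.

Definition tpt_wf (T : tree) (p : TPt T) : Prop :=
  match p with
  | TV _ => True
  | TE u v t => tadj u v /\ 0 < t < 1
  end.

Arguments dT {T} _ _.
Arguments tpt_wf {T} _.

Definition tdv (T : tree) (p : TPt T) (a : T) : R :=
  match p with
  | TV u => INR (dT u a)
  | TE u v t => Rmin (t + INR (dT u a)) (1 - t + INR (dT v a))
  end.

Arguments tdv {T} _ _.

Definition decP (P : Prop) : bool :=
  if excluded_middle_informative P then true else false.

Definition tdist (T : tree) (p q : TPt T) : R :=
  match p, q with
  | TV u, _ => tdv q u
  | TE u v t, TV w => tdv p w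
  | TE u v t, TE u' v' s =>
      if decP (u = u' /\ v = v') then Rabs (t - s)
      else if decP (u = v' /\ v = u') then Rabs (t - (1 - s))
      else Rmin (t + tdv q u) (1 - t + tdv q v)
  end.

Arguments tdist {T} _ _.

Definition tpact (G : Group) (T : tree) (A : action G T) (g : G) (p : TPt T)
  : TPt T :=
  match p with
  | TV v => TV (A g v)
  | TE u v t => TE (A g u) (A g v) t
  end.

Arguments tpact {G T} _ _ _.

(** action by graph automorphisms (simplicial / isometric action) *)
Definition by_automorphisms (G : Group) (V : Type) (e : V -> V -> Prop)
  (A : action G V) : Prop :=
  forall a x y, e x y <-> e (A a x) (A a y).

Arguments by_automorphisms {G V} _ _.

Definition acylindrical (G : Group) (T : tree) (A : action G T) (kappa : nat)
  : Prop :=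
  forall (n : nat) (p : nat -> T), (kappa + 1 <= n)%nat -> rpath (@tadj T) n p ->
  forall g : G, (forall i, (i <= n)%nat -> A g (p i) = p i) -> g = gone.

Arguments acylindrical {G T} _ _.

(** loxodromic: g fixes no point of the realization of T (positive
    translation length) *)
Definition loxodromic (G : Group) (T : tree) (A : action G T) (g : G) : Prop :=
  forall p : TPt T, tpt_wf p -> 0 < tdist p (tpact A g p).

Arguments loxodromic {G T} _ _.

Definition on_line (T : tree) (l : Z -> T) (p : TPt T) : Prop :=
  match p with
  | TV v => exists k, v = l k
  | TE u v _ => exists k, (u = l k /\ v = l (k + 1)%Z) \/ (u = l (k + 1)%Z /\ v = l k)
  end.

Arguments on_line {T} _ _.

Definition is_axis (G : Group) (T : tree) (A : action G T) (g : G)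
  (alpha : TPt T -> Prop) : Prop :=
  exists l : Z -> T,
    (forall k, tadj (l k) (l (k + 1)%Z)) /\
    (forall k, l k <> l (k + 2)%Z) /\
    (forall k, exists k', A g (l k) = l k') /\
    (forall k, exists k', A g (l k') = l k) /\
    (forall p, alpha p <-> on_line l p).

Arguments is_axis {G T} _ _ _.

Definition in_nbhd_orbit (G : Group) (X : graph) (A : action G X) (eps : R)
  (g : G) (x0 : X) (x : X) : Prop :=
  exists n : Z, INR (gdist (@adj X) x (A (gpow g n) x0)) <= eps.

Arguments in_nbhd_orbit {G X} _ _ _ _ _.

(* Main.v *)
Require Import Defs.
From Stdlib Require Import Reals ZArith Lia Lra Arith Classical ClassicalEpsilon.
Open Scope R_scope.
Arguments gmulA {_} _ _ _.
Arguments gmul1l {_} _.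
Arguments gmulVl {_} _.
Arguments act1 {_ _} _ _.
Arguments actM {_ _} _ _ _ _.


Section Gr.
Variables (V : Type) (e : V -> V -> Prop).
Hypothesis esym : forall x y, e x y -> e y x.
Hypothesis econn : connected e.

Lemma least_exists (P : nat -> Prop) : (exists n, P n) -> exists n, P n /\ forall m, P m -> (n <= m)%nat.
Proof.
  intros Hex.
  destruct (Wf_nat.dec_inh_nat_subset_has_unique_least_element P (fun n => classic (P n)) Hex)
    as [n [[Hn Hmin] _]].
  exists n. split; auto.
Qed.

Lemma gdist_spec x y : walk e (gdist e x y) x y /\ forall m, walk e m x y -> (gdist e x y <= m)%nat.
Proof.
  unfold gdist. apply epsilon_spec. apply least_exists. apply econn.
Qed.

Lemma gdist_walk x y : walk e (gdist e x y) x y.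
Proof. apply gdist_spec. Qed.

Lemma gdist_min x y m : walk e m x y -> (gdist e x y <= m)%nat.
Proof. apply gdist_spec. Qed.

Lemma walk_refl x : walk e 0 x x.
Proof. exists (fun _ => x). repeat split; intros; lia. Qed.

Lemma walk_rev n x y : walk e n x y -> walk e n y x.
Proof.
  intros [p [H0 [Hn He]]]. exists (fun i => p (n - i)%nat). repeat split.
  - rewrite Nat.sub_0_r; auto.
  - rewrite Nat.sub_diag; auto.
  - intros i Hi. apply esym. replace (n - i)%nat with (S (n - S i)) by lia. apply He. lia.
Qed.

Lemma walk_cat n m x y z : walk e n x y -> walk e m y z -> walk e (n + m) x z.
Proof.
  intros [p [H0 [Hn He]]] [q [G0 [Gm Ge]]].
  exists (fun i => if (i <=? n)%nat then p i else q (i - n)%nat). repeat split.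
  - simpl. auto.
  - destruct (Nat.leb_spec (n + m) n).
    + assert (m = 0%nat) by lia. subst m. rewrite Nat.add_0_r. rewrite Hn, <- G0, <- Gm. reflexivity.
    + rewrite <- Gm. f_equal. lia.
  - intros i Hi. destruct (Nat.leb_spec i n); destruct (Nat.leb_spec (S i) n).
    + apply He. lia.
    + assert (i = n) by lia. subst i. rewrite Hn, <- G0. replace (S n - n)%nat with 1%nat by lia.
      apply Ge. lia.
    + lia.
    + replace (S i - n)%nat with (S (i - n)) by lia. apply Ge. lia.
Qed.

Lemma walk_adj x y : e x y -> walk e 1 x y.
Proof.
  intros H. exists (fun i => match i with O => x | _ => y end). repeat split.
  intros i Hi. assert (i = 0%nat) by lia. subst. auto.
Qed.

Lemma gdist_refl x : gdist e x x = 0%nat.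
Proof. pose proof (gdist_min x x 0 (walk_refl x)). lia. Qed.

Lemma gdist_sym x y : gdist e x y = gdist e y x.
Proof.
  apply Nat.le_antisymm; apply gdist_min; apply walk_rev; apply gdist_walk.
Qed.

Lemma gdist_tri x y z : (gdist e x z <= gdist e x y + gdist e y z)%nat.
Proof. apply gdist_min. eapply walk_cat; apply gdist_walk. Qed.

Lemma gdist_adj x y : e x y -> (gdist e x y <= 1)%nat.
Proof. intro H. apply gdist_min, walk_adj, H. Qed.

Lemma gdist_0 x y : gdist e x y = 0%nat -> x = y.
Proof.
  intros H. destruct (gdist_walk x y) as [p [H0 [Hn _]]]. rewrite H in Hn. congruence.
Qed.

Lemma walk_prefix n (x : V) (p : nat -> V) : p O = x -> (forall i, (i < n)%nat -> e (p i) (p (S i))) ->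
  forall i, (i <= n)%nat -> (gdist e x (p i) <= i)%nat.
Proof.
  intros H0 He i Hi. apply gdist_min. exists p. repeat split; auto.
  intros j Hj. apply He. lia.
Qed.

Lemma gdist_auto (f finv : V -> V) :
  (forall x y, e x y <-> e (f x) (f y)) -> (forall x, finv (f x) = x) -> (forall x, f (finv x) = x) ->
  forall x y, gdist e (f x) (f y) = gdist e x y.
Proof.
  intros Hf Hl Hr.
  assert (M : forall (h : V -> V), (forall x y, e x y -> e (h x) (h y)) ->
            forall x y, (gdist e (h x) (h y) <= gdist e x y)%nat).
  { intros h Hh x y. apply gdist_min. destruct (gdist_walk x y) as [p [H0 [Hn He]]].
    exists (fun i => h (p i)). repeat split; try congruence. intros; apply Hh, He; auto. }
  intros x y. apply Nat.le_antisymm.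
  - apply M. intros a b Hab. apply (proj1 (Hf a b)). exact Hab.
  - assert (Hi : forall a b, e a b -> e (finv a) (finv b)).
    { intros a b Hab. apply (proj2 (Hf _ _)). rewrite !Hr. exact Hab. }
    pose proof (M finv Hi (f x) (f y)) as Hm. rewrite !Hl in Hm. exact Hm.
Qed.

End Gr.
Section Grp.
Variable G : Group.
Implicit Types a b c : G.

Lemma gmulVr a : gmul a (ginv a) = gone.
Proof.
  assert (H1 : gmul (ginv a) (gmul a (ginv a)) = ginv a).
  { rewrite gmulA, gmulVl, gmul1l. reflexivity. }
  rewrite <- (gmul1l (gmul a (ginv a))).
  rewrite <- (gmulVl (ginv a)).
  rewrite <- gmulA, H1. reflexivity.
Qed.

Lemma gmul1r a : gmul a gone = a.
Proof. rewrite <- (gmulVl a), gmulA, gmulVr, gmul1l. reflexivity. Qed.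

Lemma ginv_eq1 a b : gmul (ginv a) b = gone -> b = a.
Proof.
  intro H. rewrite <- (gmul1l b), <- (gmulVr a), <- gmulA, H, gmul1r. reflexivity.
Qed.

Lemma gnpow_comm (g : G) n : gmul g (gnpow g n) = gmul (gnpow g n) g.
Proof.
  induction n; simpl. rewrite gmul1l, gmul1r; reflexivity.
  rewrite IHn at 1. rewrite gmulA. reflexivity.
Qed.

Lemma ginv_mul a b : ginv (gmul a b) = gmul (ginv b) (ginv a).
Proof.
  assert (U : forall x y : G, gmul x y = gone -> x = ginv y).
  { intros x y H. rewrite <- (gmul1r x), <- (gmulVr y), gmulA, H, gmul1l. reflexivity. }
  symmetry. apply U.
  rewrite <- !gmulA. rewrite (gmulA (ginv a) a), gmulVl, gmul1l, gmulVl. reflexivity.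
Qed.

Lemma gpow_succ (g : G) n : gpow g (n + 1) = gmul g (gpow g n).
Proof.
  destruct n as [|p|p].
  - reflexivity.
  - simpl. rewrite Pos2Nat.inj_add. simpl. rewrite Nat.add_1_r. reflexivity.
  - destruct (Pos.succ_pred_or p) as [->|Hp].
    + simpl. rewrite gmul1r, gmulVr. reflexivity.
    + rewrite <- Hp. replace (Z.neg (Pos.succ (Pos.pred p)) + 1)%Z with (Z.neg (Pos.pred p)) by lia.
      simpl. rewrite Pos2Nat.inj_succ. simpl.
      rewrite gnpow_comm, ginv_mul, gmulA, gmulVr, gmul1l. reflexivity.
Qed.

Lemma gpow_comm (g : G) n : gmul g (gpow g n) = gmul (gpow g n) g.
Proof.
  destruct n as [|p|p]; simpl.
  - rewrite gmul1l, gmul1r; reflexivity.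
  - apply gnpow_comm.
  - set (y := gnpow g (Pos.to_nat p)).
    assert (Hc : gmul g y = gmul y g) by apply gnpow_comm.
    assert (E1 : gmul g (ginv y) = gmul (gmul (ginv y) (gmul y g)) (ginv y)).
    { rewrite (gmulA (ginv y) y g), gmulVl, gmul1l. reflexivity. }
    rewrite E1, <- Hc. rewrite <- (gmulA (ginv y) (gmul g y) (ginv y)).
    rewrite <- (gmulA g y (ginv y)), gmulVr, gmul1r. reflexivity.
Qed.

End Grp.

Section Act.
Variables (G : Group) (V : Type) (A : action G V).

Lemma act_invl a v : A (ginv a) (A a v) = v.
Proof. rewrite <- actM, gmulVl, act1. reflexivity. Qed.

Lemma act_invr a v : A a (A (ginv a) v) = v.
Proof. rewrite <- actM, gmulVr, act1. reflexivity. Qed.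

Lemma act_inj a v w : A a v = A a w -> v = w.
Proof. intro H. rewrite <- (act_invl a v), H, act_invl. reflexivity. Qed.

Lemma act_conj a g v : A (conj a g) v = A a (A g (A (ginv a) v)).
Proof. unfold conj. rewrite !actM. reflexivity. Qed.

Lemma orbit_gen (g : G) (F : Z -> V) (t : Z) :
  (forall k, A g (F k) = F (k + t)%Z) ->
  forall n j, A (gpow g n) (F j) = F (j + n * t)%Z.
Proof.
  intros HF.
  assert (Hn : forall N j, A (gnpow g N) (F j) = F (j + Z.of_nat N * t)%Z).
  { induction N; intro j; cbn [gnpow].
    - rewrite act1. f_equal. simpl. lia.
    - rewrite actM, IHN, HF. f_equal. rewrite Nat2Z.inj_succ. lia. }
  intros n j. destruct n as [|p|p]; unfold gpow.
  - rewrite act1. f_equal. lia.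
  - rewrite Hn. f_equal. rewrite positive_nat_Z. lia.
  - assert (E : F j = A (gnpow g (Pos.to_nat p)) (F (j + Z.neg p * t)%Z)).
    { rewrite Hn. f_equal. rewrite positive_nat_Z. lia. }
    rewrite E, act_invl. reflexivity.
Qed.

End Act.

Definition pwalk (V : Type) (e : V -> V -> Prop) (P : V -> Prop) (n : nat) (x y : V) : Prop :=
  exists p : nat -> V, p O = x /\ p n = y /\
    (forall i, (i < n)%nat -> e (p i) (p (S i))) /\ (forall i, (i <= n)%nat -> P (p i)).
Arguments pwalk {V} _ _ _ _ _.

Section PW.
Variables (V : Type) (e : V -> V -> Prop).
Hypothesis esym : forall x y, e x y -> e y x.

Lemma rpath_shift k r : rpath e (S k) r -> rpath e k (fun i => r (S i)).
Proof.
  intros [H1 H2]. split; intros i Hi; [apply H1 | apply H2]; lia.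
Qed.

Lemma reduce (P : V -> Prop) : forall n u v, pwalk e P n u v ->
  exists k r, (k <= n)%nat /\ r O = u /\ r k = v /\ rpath e k r /\ forall i, (i <= k)%nat -> P (r i).
Proof.
  induction n as [|n IH]; intros u v [p [H0 [Hn [He HP]]]].
  - exists 0%nat, (fun _ => u). split; [lia|]. split; [reflexivity|]. split; [congruence|].
    split; [split; intros; lia|].
    intros i Hi. rewrite <- H0. apply HP. lia.
  - destruct (IH (p 1%nat) v) as [k [r [Hk [R0 [Rk [Rp RP]]]]]].
    { exists (fun i => p (S i)). repeat split; auto.
      - intros i Hi. apply He. lia.
      - intros i Hi. apply HP. lia. }
    destruct k as [|k'].
    + exists 1%nat, (fun i => match i with O => u | _ => v end).
      split; [lia|]. split; [reflexivity|]. split; [reflexivity|]. split; [split|].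
      * intros i Hi. assert (i = 0%nat) by lia. subst i. rewrite <- H0, <- Rk, R0. apply He. lia.
      * intros i Hi. lia.
      * intros i Hi. destruct i. rewrite <- H0. apply HP; lia. rewrite <- Rk. apply RP. lia.
    + destruct (classic (r 1%nat = u)) as [Heq|Hne].
      * exists k', (fun i => r (S i)). split; [lia|]. split; [exact Heq|]. split; [exact Rk|].
        split; [apply rpath_shift; exact Rp|].
        intros i Hi. apply RP. lia.
      * exists (S (S k')), (fun i => match i with O => u | S j => r j end).
        split; [lia|]. split; [reflexivity|]. split; [exact Rk|]. split; [split|].
        -- intros i Hi. destruct i. rewrite R0, <- H0. apply He. lia. apply Rp. lia.
        -- intros i Hi. destruct i. intro Hc. apply Hne. auto. apply Rp. lia.
        -- intros i Hi. destruct i. rewrite <- H0. apply HP; lia. apply RP. lia.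
Qed.

Lemma pwalk_weaken (P Q : V -> Prop) n x y : (forall z, P z -> Q z) -> pwalk e P n x y -> pwalk e Q n x y.
Proof.
  intros HPQ [p [H0 [Hn [He HP]]]]. exists p. repeat split; auto.
Qed.

Lemma pwalk_rev P n x y : pwalk e P n x y -> pwalk e P n y x.
Proof.
  intros [p [H0 [Hn [He HP]]]]. exists (fun i => p (n - i)%nat). repeat split.
  - rewrite Nat.sub_0_r; auto.
  - rewrite Nat.sub_diag; auto.
  - intros i Hi. apply esym. replace (n - i)%nat with (S (n - S i)) by lia. apply He. lia.
  - intros i Hi. apply HP. lia.
Qed.

Lemma pwalk_cat P n m x y z : pwalk e P n x y -> pwalk e P m y z -> pwalk e P (n + m) x z.
Proof.
  intros [p [H0 [Hn [He HP]]]] [q [G0 [Gm [Ge GP]]]].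
  exists (fun i => if (i <=? n)%nat then p i else q (i - n)%nat). repeat split.
  - simpl. auto.
  - destruct (Nat.leb_spec (n + m) n).
    + assert (m = 0%nat) by lia. subst m. rewrite Nat.add_0_r. rewrite Hn, <- G0, <- Gm. reflexivity.
    + rewrite <- Gm. f_equal. lia.
  - intros i Hi. destruct (Nat.leb_spec i n); destruct (Nat.leb_spec (S i) n).
    + apply He. lia.
    + assert (i = n) by lia. subst i. rewrite Hn, <- G0. replace (S n - n)%nat with 1%nat by lia.
      apply Ge. lia.
    + lia.
    + replace (S i - n)%nat with (S (i - n)) by lia. apply Ge. lia.
  - intros i Hi. destruct (Nat.leb_spec i n). apply HP; lia. apply GP; lia.
Qed.

Lemma rpath_rev n p : rpath e n p -> rpath e n (fun i => p (n - i)%nat).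
Proof.
  intros [H1 H2]. split.
  - intros i Hi. apply esym. replace (n - i)%nat with (S (n - S i)) by lia. apply H1. lia.
  - intros i Hi. intro Hc. apply (H2 (n - S (S i))%nat). lia.
    replace (S (S (n - S (S i)))) with (n - i)%nat by lia. rewrite Hc. reflexivity.
Qed.

Lemma rpath_cat n m p q : rpath e n p -> rpath e m q -> p n = q O ->
  ((1 <= n)%nat -> (1 <= m)%nat -> p (n - 1)%nat <> q 1%nat) ->
  rpath e (n + m) (fun i => if (i <=? n)%nat then p i else q (i - n)%nat).
Proof.
  intros [P1 P2] [Q1 Q2] J Jr. split.
  - intros i Hi. destruct (Nat.leb_spec i n); destruct (Nat.leb_spec (S i) n).
    + apply P1. lia.
    + assert (i = n) by lia. subst i. rewrite J. replace (S n - n)%nat with 1%nat by lia.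
      apply Q1. lia.
    + lia.
    + replace (S i - n)%nat with (S (i - n)) by lia. apply Q1. lia.
  - intros i Hi. destruct (Nat.leb_spec i n); destruct (Nat.leb_spec (S (S i)) n).
    + apply P2. lia.
    + destruct (Nat.eq_dec (S i) n).
      * subst n. replace (S (S i) - S i)%nat with 1%nat by lia.
        replace i with (S i - 1)%nat at 1 by lia. apply Jr; lia.
      * assert (i = n) by lia. subst i. rewrite J. replace (S (S n) - n)%nat with 2%nat by lia.
        apply (Q2 0%nat). lia.
    + lia.
    + replace (S (S i) - n)%nat with (S (S (i - n))) by lia. apply Q2. lia.
Qed.

End PW.

Section Tree.
Variable T : tree.

Lemma rpath_unique : forall n p m q, rpath (@tadj T) n p -> rpath (@tadj T) m q ->
  p O = q O -> p n = q m -> n = m /\ forall i, (i <= n)%nat -> p i = q i.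
Proof.
  induction n as [|n IH]; intros p m q Hp Hq E0 En.
  - destruct m as [|m].
    + split; auto. intros i Hi. assert (i = 0%nat) by lia. subst. auto.
    + exfalso. apply (@tacyc T (S m) q); [lia | auto | congruence].
  - destruct m as [|m].
    + exfalso. apply (@tacyc T (S n) p); [lia | auto | congruence].
    + destruct (classic (p 1%nat = q 1%nat)) as [E1|E1].
      * destruct (IH (fun i => p (S i)) m (fun i => q (S i))) as [Hnm Hall]; auto.
        apply rpath_shift; auto. apply rpath_shift; auto.
        split. lia. intros i Hi. destruct i. auto. apply Hall. lia.
      * exfalso.
        pose proof (rpath_cat _ (@tadj T) (S n) (S m) _ q
                      (rpath_rev _ _ (@tadj_sym T) _ _ Hp) Hq) as Hc.
        simpl in Hc. rewrite Nat.sub_diag in Hc.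
        specialize (Hc E0).
        assert (Hj : (1 <= S n)%nat -> (1 <= S m)%nat -> p (S n - (S n - 1))%nat <> q 1%nat).
        { intros _ _. replace (S n - (S n - 1))%nat with 1%nat by lia. exact E1. }
        specialize (Hc Hj).
        apply (@tacyc T (S n + S m) _ ltac:(lia) Hc).
        simpl. destruct (Nat.leb_spec (S (n + S m)) (S n)); [lia|].
        destruct (Nat.leb_spec (n + S m) n); [lia|]. rewrite En. f_equal. lia.
Qed.

Definition dTv (u v : T) := dT u v.

Lemma dT_rpath n p : rpath (@tadj T) n p -> dT (p O) (p n) = n.
Proof.
  intros Hp. unfold dT.
  destruct (gdist_walk _ _ (@tconn T) (p O) (p n)) as [w [W0 [Wn We]]].
  destruct (reduce _ (@tadj T) (fun _ => True) (gdist (@tadj T) (p O) (p n)) (p O) (p n)) as [k [r [Hk [R0 [Rk [Rp _]]]]]].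
  { exists w. repeat split; auto. }
  destruct (rpath_unique k r n p Rp Hp R0 Rk) as [-> _].
  apply Nat.le_antisymm; auto.
  apply gdist_min. apply (@tconn T). exists p. repeat split; auto. apply Hp.
Qed.

Lemma contain P N n p : pwalk (@tadj T) P N (p O) (p n) -> rpath (@tadj T) n p ->
  forall i, (i <= n)%nat -> P (p i).
Proof.
  intros Hw Hp i Hi.
  destruct (reduce _ _ P _ _ _ Hw) as [k [r [Hk [R0 [Rk [Rp RP]]]]]].
  destruct (rpath_unique k r n p Rp Hp R0 Rk) as [-> Hall].
  rewrite <- Hall; auto.
Qed.

End Tree.

Section Lines.
Variable T : tree.

Definition line (l : Z -> T) : Prop :=
  (forall k, tadj (l k) (l (k + 1)%Z)) /\ (forall k, l k <> l (k + 2)%Z).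

Lemma dT_sym (u v : T) : dT u v = dT v u.
Proof. apply gdist_sym. apply tadj_sym. apply tconn. Qed.
Lemma dT_tri (u v w : T) : (dT u w <= dT u v + dT v w)%nat.
Proof. apply gdist_tri. apply tconn. Qed.
Lemma dT_refl (u : T) : dT u u = 0%nat.
Proof. apply gdist_refl. apply tconn. Qed.
Lemma dT_adj (u v : T) : tadj u v -> (dT u v <= 1)%nat.
Proof. apply gdist_adj. apply tconn. Qed.
Lemma dT_0 (u v : T) : dT u v = 0%nat -> u = v.
Proof. apply gdist_0. apply tconn. Qed.

Lemma dT_auto (G : Group) (A : action G T) a (u v : T) :
  by_automorphisms (@tadj T) A -> dT (A a u) (A a v) = dT u v.
Proof.
  intros HA. unfold dT. apply (gdist_auto _ _ (@tconn T) (A a) (A (ginv a))).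
  - intros x y. apply HA.
  - intros; apply act_invl.
  - intros; apply act_invr.
Qed.

Lemma line_seg l i n : line l -> rpath (@tadj T) n (fun t => l (i + Z.of_nat t)%Z).
Proof.
  intros [H1 H2]. split.
  - intros t _. rewrite Nat2Z.inj_succ. replace (i + Z.succ (Z.of_nat t))%Z with (i + Z.of_nat t + 1)%Z by lia.
    apply H1.
  - intros t _. rewrite !Nat2Z.inj_succ.
    replace (i + Z.succ (Z.succ (Z.of_nat t)))%Z with (i + Z.of_nat t + 2)%Z by lia. apply H2.
Qed.

Lemma line_dist l i j : line l -> dT (l i) (l j) = Z.to_nat (Z.abs (j - i)).
Proof.
  intros Hl.
  assert (K : forall i j, (i <= j)%Z -> dT (l i) (l j) = Z.to_nat (Z.abs (j - i))).
  { intros a b Hab. pose proof (dT_rpath T _ _ (line_seg l a (Z.to_nat (b - a)) Hl)) as H.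
    simpl in H. rewrite Z2Nat.id in H by lia. replace (a + 0)%Z with a in H by lia.
    replace (a + (b - a))%Z with b in H by lia. rewrite H. f_equal. lia. }
  destruct (Z.le_gt_cases i j). apply K; auto.
  rewrite dT_sym, K by lia. f_equal. lia.
Qed.

Lemma line_inj l i j : line l -> l i = l j -> i = j.
Proof.
  intros Hl E. pose proof (line_dist l i j Hl) as H. rewrite E, dT_refl in H. lia.
Qed.

Lemma line_pwalk l a b : line l ->
  pwalk (@tadj T) (fun z => exists c, z = l c) (Z.to_nat (Z.abs (b - a))) (l a) (l b).
Proof.
  intros Hl.
  assert (K : forall a b, (a <= b)%Z ->
    pwalk (@tadj T) (fun z => exists c, z = l c) (Z.to_nat (Z.abs (b - a))) (l a) (l b)).
  { intros x y Hxy. exists (fun t => l (x + Z.of_nat t)%Z). split; [f_equal; lia|].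
    split; [f_equal; rewrite Z2Nat.id; lia|]. split.
    - intros i _. apply (line_seg l x (S i) Hl). lia.
    - intros i _. eauto. }
  destruct (Z.le_gt_cases a b). apply K; auto.
  apply pwalk_rev. apply tadj_sym. replace (Z.abs (b - a)) with (Z.abs (a - b)) by lia. apply K. lia.
Qed.

Lemma ball_pwalk (x y : T) (E : nat) : (dT x y <= E)%nat ->
  pwalk (@tadj T) (fun z => (dT x z <= E)%nat) (dT x y) x y.
Proof.
  intros HE. destruct (gdist_walk _ _ (@tconn T) x y) as [p [H0 [Hn He]]].
  exists p. repeat split; auto.
  intros i Hi. pose proof (walk_prefix _ _ (@tconn T) _ x p H0 He i Hi). unfold dT. lia.
Qed.

Lemma overlap l1 l2 i j a b (E : nat) : line l1 -> line l2 -> (i < j)%Z ->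
  (dT (l1 i) (l2 a) <= E)%nat -> (dT (l1 j) (l2 b) <= E)%nat ->
  forall k, (i + Z.of_nat E < k < j - Z.of_nat E)%Z -> exists c, l1 k = l2 c.
Proof.
  intros L1 L2 Hij Ha Hb k Hk.
  set (P := fun z => (dT (l1 i) z <= E)%nat \/ (exists c, z = l2 c) \/ (dT (l1 j) z <= E)%nat).
  assert (W : pwalk (@tadj T) P (dT (l1 i) (l2 a) + Z.to_nat (Z.abs (b - a)) + dT (l1 j) (l2 b))
                (l1 i) (l1 j)).
  { apply pwalk_cat with (l2 b). apply pwalk_cat with (l2 a).
    - apply pwalk_weaken with (fun z => (dT (l1 i) z <= E)%nat). unfold P; tauto.
      apply ball_pwalk; auto.
    - apply pwalk_weaken with (fun z => exists c, z = l2 c). unfold P; tauto.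
      apply line_pwalk; auto.
    - apply pwalk_rev. apply tadj_sym.
      apply pwalk_weaken with (fun z => (dT (l1 j) z <= E)%nat). unfold P; tauto.
      apply ball_pwalk; auto. }
  set (n := Z.to_nat (j - i)).
  assert (E0 : l1 (i + Z.of_nat 0)%Z = l1 i) by (f_equal; lia).
  assert (En : l1 (i + Z.of_nat n)%Z = l1 j) by (f_equal; unfold n; lia).
  rewrite <- E0, <- En in W.
  pose proof (contain T P _ n (fun t => l1 (i + Z.of_nat t)%Z) W (line_seg l1 i _ L1)
     (Z.to_nat (k - i)) ltac:(unfold n; lia)) as Hc.
  cbv beta in Hc.
  rewrite Z2Nat.id in Hc by lia. replace (i + (k - i))%Z with k in Hc by lia.
  destruct Hc as [Hc|[[c Hc]|Hc]].
  - rewrite line_dist in Hc by auto. lia.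
  - eauto.
  - rewrite line_dist in Hc by auto. lia.
Qed.

End Lines.

Lemma decP_true (P : Prop) : decP P = true -> P.
Proof. unfold decP. destruct (excluded_middle_informative P); auto; discriminate. Qed.
Lemma decP_false (P : Prop) : decP P = false -> ~ P.
Proof. unfold decP. destruct (excluded_middle_informative P); auto; discriminate. Qed.

Section TD.
Variable T : tree.

Definition base (p : TPt T) : T := match p with TV u => u | TE u _ _ => u end.

Lemma Rtri (u v w : T) : INR (dT u w) <= INR (dT u v) + INR (dT v w).
Proof. rewrite <- plus_INR. apply le_INR. apply dT_tri. Qed.

Lemma Radj (u v : T) : tadj u v -> INR (dT u v) <= 1.
Proof. intros H. replace 1 with (INR 1) by reflexivity. apply le_INR. apply dT_adj; auto. Qed.

Lemma Rsym (u v : T) : INR (dT u v) = INR (dT v u).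
Proof. rewrite dT_sym. reflexivity. Qed.

Lemma base_close (p q : TPt T) : tpt_wf p -> tpt_wf q ->
  INR (dT (base p) (base q)) <= tdist p q + 2.
Proof.
  destruct p as [u|u v t]; destruct q as [w|w w' s]; simpl; intros Hp Hq.
  - rewrite Rsym. lra.
  - destruct Hq as [Ha Hs].
    pose proof (Rtri u w' w). pose proof (Radj _ _ (tadj_sym _ _ _ Ha)).
    pose proof (Rsym u w'). pose proof (Rsym u w). pose proof (pos_INR (dT u w')).
    unfold Rmin; destruct (Rle_dec _ _); lra.
  - destruct Hp as [Ha Ht].
    pose proof (Rtri u v w). pose proof (Radj _ _ Ha). pose proof (pos_INR (dT v w)).
    unfold Rmin; destruct (Rle_dec _ _); lra.
  - destruct Hp as [Ha Ht]. destruct Hq as [Hb Hs].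
    destruct (decP (u = w /\ v = w')) eqn:D1.
    { apply decP_true in D1. destruct D1 as [-> ->]. rewrite dT_refl. simpl.
      pose proof (Rabs_pos (t - s)). lra. }
    destruct (decP (u = w' /\ v = w)) eqn:D2.
    { apply decP_true in D2. destruct D2 as [-> ->].
      pose proof (Radj _ _ Ha). pose proof (Rabs_pos (t - (1 - s))). lra. }
    simpl.
    pose proof (Rsym u w).
    pose proof (Rtri u w' w). pose proof (Radj _ _ (tadj_sym _ _ _ Hb)). pose proof (Rsym u w').
    pose proof (Rtri u v w). pose proof (Radj _ _ Ha). pose proof (Rsym v w).
    pose proof (Rtri v w' w). pose proof (Rsym v w').
    pose proof (pos_INR (dT u w)). pose proof (pos_INR (dT v w)).
    pose proof (pos_INR (dT u w')). pose proof (pos_INR (dT v w')).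
    repeat (unfold Rmin; destruct (Rle_dec _ _)); lra.
Qed.

Lemma tdv_pos (q : TPt T) a : tpt_wf q -> 0 <= tdv q a.
Proof.
  destruct q as [w|w w' s]; simpl; intros Hq.
  - apply pos_INR.
  - destruct Hq as [_ Hs]. pose proof (pos_INR (dT w a)). pose proof (pos_INR (dT w' a)).
    unfold Rmin; destruct (Rle_dec _ _); lra.
Qed.

Lemma tdist0_online l (p q : TPt T) : tpt_wf p -> tpt_wf q -> tdist p q = 0 ->
  on_line l q -> on_line l p.
Proof.
  destruct p as [u|u v t]; destruct q as [w|w w' s]; simpl; intros Hp Hq H0 Hl.
  - replace 0 with (INR 0) in H0 by reflexivity. apply INR_eq in H0. apply dT_0 in H0.
    subst. auto.
  - exfalso. destruct Hq as [_ Hs]. pose proof (pos_INR (dT w u)). pose proof (pos_INR (dT w' u)).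
    revert H0. unfold Rmin; destruct (Rle_dec _ _); lra.
  - exfalso. destruct Hp as [_ Ht]. pose proof (pos_INR (dT u w)). pose proof (pos_INR (dT v w)).
    revert H0. unfold Rmin; destruct (Rle_dec _ _); lra.
  - revert H0. destruct (decP (u = w /\ v = w')) eqn:D1.
    { apply decP_true in D1. destruct D1 as [-> ->]. auto. }
    destruct (decP (u = w' /\ v = w)) eqn:D2.
    { intros _. apply decP_true in D2. destruct D2 as [-> ->]. destruct Hl as [k [[A1 A2]|[A1 A2]]];
      exists k; tauto. }
    intros H0. exfalso. revert H0. destruct Hp as [_ Ht].
    pose proof (tdv_pos (TE w w' s) u Hq). pose proof (tdv_pos (TE w w' s) v Hq).
    assert (Hlt : 0 < Rmin (t + tdv (TE w w' s) u) (1 - t + tdv (TE w w' s) v))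
      by (apply Rmin_glb_lt; lra).
    simpl in Hlt. lra.
Qed.

Variable G : Group.
Variable A : action G T.
Hypothesis HA : by_automorphisms (@tadj T) A.

Lemma tpact_wf a p : tpt_wf p -> tpt_wf (tpact A a p).
Proof.
  destruct p as [u|u v t]; simpl; auto. intros [H1 H2]. split; auto. apply HA; auto.
Qed.

Lemma base_tpact a p : base (tpact A a p) = A a (base p).
Proof. destruct p; reflexivity. Qed.

Lemma online_tpact c l p : on_line l p -> on_line (fun k => A c (l k)) (tpact A c p).
Proof.
  destruct p as [u|u v t]; simpl.
  - intros [k ->]. eauto.
  - intros [k [[-> ->]|[-> ->]]]; exists k; auto.
Qed.

Lemma online_base l p : on_line l p -> exists k, base p = l k.
Proof.
  destruct p as [u|u v t]; simpl.
  - intros [k ->]. eauto.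
  - intros [k [[-> ->]|[-> ->]]]; eauto.
Qed.

Lemma online_sub l l' p : line T l -> line T l' -> (forall k, exists c, l' k = l c) ->
  on_line l' p -> on_line l p.
Proof.
  intros L L' Hs. destruct p as [u|u v t]; simpl.
  - intros [k ->]. apply Hs.
  - assert (Key : forall k, exists c, (l' k = l c /\ l' (k + 1)%Z = l (c + 1)%Z) \/
                                    (l' k = l (c + 1)%Z /\ l' (k + 1)%Z = l c)).
    { intros k. destruct (Hs k) as [c1 E1]. destruct (Hs (k + 1)%Z) as [c2 E2].
      assert (D : dT (l c1) (l c2) = 1%nat).
      { rewrite <- E1, <- E2, line_dist by auto. replace (k + 1 - k)%Z with 1%Z by lia. reflexivity. }
      rewrite line_dist in D by auto.
      destruct (Z.eq_dec c2 (c1 + 1)) as [->|Hne].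
      - exists c1. left. auto.
      - exists c2. right. split; auto. rewrite E1. f_equal. lia. }
    intros [k [[-> ->]|[-> ->]]]; destruct (Key k) as [c [[B1 B2]|[B1 B2]]]; exists c; tauto.
Qed.

End TD.

Lemma affine (phi : Z -> Z) (A B : Z) :
  (forall k k', (A <= k <= B)%Z -> (A <= k' <= B)%Z -> Z.abs (phi k - phi k') = Z.abs (k - k')) ->
  forall j k, (A <= j)%Z -> (j + 1 <= B)%Z -> (A <= k <= B)%Z ->
  phi k = (phi j + (phi (j + 1) - phi j) * (k - j))%Z.
Proof.
  intros Hi j k H1 H2 H3.
  pose proof (Hi (j + 1)%Z j ltac:(lia) ltac:(lia)) as Hs.
  pose proof (Hi k j ltac:(lia) ltac:(lia)) as Ha.
  pose proof (Hi k (j + 1)%Z ltac:(lia) ltac:(lia)) as Hb.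
  assert (S : (phi (j + 1) - phi j = 1 \/ phi (j + 1) - phi j = -1)%Z) by lia.
  destruct S as [S|S]; rewrite S; lia.
Qed.

Section Shift.
Variables (G : Group) (T : tree) (A : action G T).
Hypothesis HA : by_automorphisms (@tadj T) A.

Lemma shift_exists (g : G) (l : Z -> T) : line T l ->
  (forall k, exists k', A g (l k) = l k') ->
  (forall v, A g v <> v) ->
  (forall u v, tadj u v -> A g u = v -> A g v = u -> False) ->
  exists tau, tau <> 0%Z /\ forall k, A g (l k) = l (k + tau)%Z.
Proof.
  intros L Hinv Hfix Hinvo.
  set (phi := fun k => epsilon (inhabits 0%Z) (fun c => A g (l k) = l c)).
  assert (Hphi : forall k, A g (l k) = l (phi k)).
  { intros k. unfold phi. apply (epsilon_spec (inhabits 0%Z) (fun c => A g (l k) = l c)). apply Hinv. }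
  assert (Iso : forall k k', Z.abs (phi k - phi k') = Z.abs (k - k')).
  { intros k k'. pose proof (line_dist T l (phi k') (phi k) L) as D1.
    rewrite <- !Hphi, dT_auto, line_dist in D1 by auto. lia. }
  assert (Aff : forall k, phi k = (phi 0 + (phi 1 - phi 0) * k)%Z).
  { intros k. pose proof (affine phi (- Z.abs k - 1) (Z.abs k + 1) (fun k k' _ _ => Iso k k') 0 k)
      as H. replace (k - 0)%Z with k in H by lia. apply H; lia. }
  pose proof (Iso 1%Z 0%Z) as S1.
  assert (S : (phi 1 - phi 0 = 1 \/ phi 1 - phi 0 = -1)%Z) by lia.
  destruct S as [S|S]; rewrite S in Aff.
  - exists (phi 0%Z). split.
    + intro H0. apply (Hfix (l 0%Z)). rewrite Hphi, H0. reflexivity.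
    + intros k. rewrite Hphi, Aff. f_equal. lia.
  - exfalso. destruct (Z.Even_or_Odd (phi 0%Z)) as [[m Hm]|[m Hm]].
    + apply (Hfix (l m)). rewrite Hphi, Aff. f_equal. lia.
    + apply (Hinvo (l m) (l (m + 1)%Z)).
      * apply L.
      * rewrite Hphi, Aff. f_equal. lia.
      * rewrite Hphi, Aff. f_equal. lia.
Qed.

Lemma lox_nofix (g a : G) : loxodromic A g -> forall v, A (conj a g) v <> v.
Proof.
  intros Hl v Hv. set (w := A (ginv a) v).
  assert (Hw : A g w = w).
  { rewrite act_conj in Hv. apply (f_equal (A (ginv a))) in Hv. rewrite act_invl in Hv. exact Hv. }
  specialize (Hl (TV w) I). simpl in Hl. rewrite Hw, dT_refl in Hl. simpl in Hl. lra.
Qed.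

Lemma lox_noinv (g a : G) : loxodromic A g ->
  forall u v, tadj u v -> A (conj a g) u = v -> A (conj a g) v = u -> False.
Proof.
  intros Hl u v Ha Hu Hv.
  set (w1 := A (ginv a) u). set (w2 := A (ginv a) v).
  assert (H1 : A g w1 = w2).
  { rewrite act_conj in Hu. apply (f_equal (A (ginv a))) in Hu. rewrite act_invl in Hu. exact Hu. }
  assert (H2 : A g w2 = w1).
  { rewrite act_conj in Hv. apply (f_equal (A (ginv a))) in Hv. rewrite act_invl in Hv. exact Hv. }
  assert (Hw : tadj w1 w2) by (apply HA; exact Ha).
  assert (Hwf : tpt_wf (TE w1 w2 (/2))) by (split; [exact Hw | lra]).
  specialize (Hl _ Hwf). simpl in Hl. rewrite H1, H2 in Hl.
  revert Hl. destruct (decP (w1 = w2 /\ w2 = w1)) eqn:D1.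
  - replace (/2 - /2) with 0 by lra. rewrite Rabs_R0. lra.
  - destruct (decP (w1 = w1 /\ w2 = w2)) eqn:D2.
    + replace (/2 - (1 - /2)) with 0 by lra. rewrite Rabs_R0. lra.
    + exfalso. apply decP_false in D2. tauto.
Qed.

Lemma axis_unique (f : G) (l l' : Z -> T) (tau tau' : Z) : line T l -> line T l' -> tau' <> 0%Z ->
  (forall k, A f (l k) = l (k + tau)%Z) -> (forall k, A f (l' k) = l' (k + tau')%Z) ->
  forall k, exists c, l' k = l c.
Proof.
  intros L L' Ht Hl Hl' k.
  set (E := dT (l' 0%Z) (l 0%Z)).
  assert (HM : forall M, dT (l' (M * tau')%Z) (l (M * tau)%Z) = E).
  { intros M. pose proof (orbit_gen G T A f l tau Hl M 0%Z) as O1.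
    pose proof (orbit_gen G T A f l' tau' Hl' M 0%Z) as O2.
    simpl in O1, O2. rewrite <- O1, <- O2. apply dT_auto; auto. }
  assert (Gen : forall M1 M2, (M1 * tau' + Z.of_nat E < k < M2 * tau' - Z.of_nat E)%Z ->
            exists c, l' k = l c).
  { intros M1 M2 HH. apply (overlap T l' l (M1 * tau') (M2 * tau') (M1 * tau) (M2 * tau) E L' L);
      auto; try lia; rewrite HM; lia. }
  set (N := (Z.abs k + Z.of_nat E + 1)%Z).
  destruct (Z.lt_trichotomy tau' 0) as [Hn|[Hz|Hp]].
  - apply (Gen N (- N)%Z). nia.
  - lia.
  - apply (Gen (- N)%Z N). nia.
Qed.

Variable kappa : nat.
Hypothesis Hacyl : acylindrical A kappa.

Lemma no_long_overlap (g' h' : G) (l1 l2 : Z -> T) (t1 t2 : Z) :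
  line T l1 -> line T l2 -> t1 <> 0%Z -> t2 <> 0%Z ->
  (forall k, A g' (l1 k) = l1 (k + t1)%Z) -> (forall k, A h' (l2 k) = l2 (k + t2)%Z) ->
  ~ common_nontrivial_power g' h' ->
  forall (B : Z) (L : nat), (kappa + 1 + Z.to_nat (Z.abs (t1 * t2)) <= L)%nat ->
  (forall k, (B <= k <= B + Z.of_nat L)%Z -> exists c, l1 k = l2 c) -> False.
Proof.
  intros L1 L2 H1 H2 O1 O2 Hncp B L HL Hcov.
  set (phi := fun k => epsilon (inhabits 0%Z) (fun c => l1 k = l2 c)).
  assert (Hphi : forall k, (B <= k <= B + Z.of_nat L)%Z -> l1 k = l2 (phi k)).
  { intros k Hk. unfold phi. apply (epsilon_spec (inhabits 0%Z) (fun c => l1 k = l2 c)). apply Hcov; auto. }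
  assert (Iso : forall k k', (B <= k <= B + Z.of_nat L)%Z -> (B <= k' <= B + Z.of_nat L)%Z ->
                 Z.abs (phi k - phi k') = Z.abs (k - k')).
  { intros k k' Hk Hk'. pose proof (line_dist T l2 (phi k') (phi k) L2) as D1.
    rewrite <- !Hphi, line_dist in D1 by auto. lia. }
  pose proof (affine phi B (B + Z.of_nat L) Iso B) as Aff.
  pose proof (Iso (B + 1)%Z B ltac:(lia) ltac:(lia)) as S1.
  set (sg := (phi (B + 1) - phi B)%Z) in *.
  assert (Aff' : forall k, (B <= k <= B + Z.of_nat L)%Z -> phi k = (phi B + sg * (k - B))%Z).
  { intros k Hk. apply Aff; lia. }
  clear Aff. rename Aff' into Aff.
  assert (Sg : (sg = 1 \/ sg = -1)%Z) by lia.
  set (s := (sg * t2 * t1)%Z).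
  set (Gp := gpow g' (sg * t2)%Z). set (Hp := gpow h' t1).
  assert (OG : forall k, A Gp (l1 k) = l1 (k + s)%Z).
  { intros k. unfold Gp, s. rewrite (orbit_gen G T A g' l1 t1 O1). reflexivity. }
  assert (OH : forall c, A Hp (l2 c) = l2 (c + t1 * t2)%Z).
  { intros c. unfold Hp. rewrite (orbit_gen G T A h' l2 t2 O2). reflexivity. }
  set (C := if (0 <=? s)%Z then B else (B - s)%Z).
  set (n0 := (L - Z.to_nat (Z.abs s))%nat).
  assert (Habs : Z.abs s = Z.abs (t1 * t2)).
  { unfold s. destruct Sg as [-> | ->]; lia. }
  assert (Key : forall t, (t <= n0)%nat ->
            A (gmul (ginv Gp) Hp) (l1 (C + Z.of_nat t)%Z) = l1 (C + Z.of_nat t)%Z).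
  { intros t Ht. set (k := (C + Z.of_nat t)%Z).
    assert (Rk : (B <= k <= B + Z.of_nat L)%Z).
    { unfold k, C, n0 in *. destruct (Z.leb_spec 0 s); lia. }
    assert (Rks : (B <= k + s <= B + Z.of_nat L)%Z).
    { unfold k, C, n0 in *. destruct (Z.leb_spec 0 s); lia. }
    rewrite actM. rewrite (Hphi k Rk), OH.
    assert (Eq : (phi k + t1 * t2)%Z = phi (k + s)%Z).
    { rewrite (Aff k Rk), (Aff (k + s)%Z Rks). unfold s.
      destruct Sg as [-> | ->]; lia. }
    rewrite Eq, <- (Hphi _ Rks), <- OG, act_invl. apply Hphi; auto. }
  assert (Hf : gmul (ginv Gp) Hp = gone).
  { apply (Hacyl n0 (fun t => l1 (C + Z.of_nat t)%Z)).
    - unfold n0. lia.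
    - apply line_seg; auto.
    - exact Key. }
  apply ginv_eq1 in Hf.
  apply Hncp. exists (sg * t2)%Z, t1. split.
  - fold Gp Hp. auto.
  - fold Gp. intro Hg. pose proof (OG B) as X. rewrite Hg, act1 in X.
    apply line_inj in X; auto. unfold s in X. destruct Sg as [-> | ->]; nia.
Qed.

Lemma big_gap (g' h' : G) (l1 l2 : Z -> T) (t1 t2 : Z) :
  line T l1 -> line T l2 -> t1 <> 0%Z -> t2 <> 0%Z ->
  (forall k, A g' (l1 k) = l1 (k + t1)%Z) -> (forall k, A h' (l2 k) = l2 (k + t2)%Z) ->
  ~ common_nontrivial_power g' h' ->
  forall (E : nat) i j a b, (dT (l1 i) (l2 a) <= E)%nat -> (dT (l1 j) (l2 b) <= E)%nat ->
  (Z.of_nat (2 * E + kappa + 1 + Z.to_nat (Z.abs (t1 * t2)) + 2) <= Z.abs (i - j))%Z -> False.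
Proof.
  intros L1 L2 H1 H2 O1 O2 Hncp E.
  assert (W : forall i j a b, (i < j)%Z -> (dT (l1 i) (l2 a) <= E)%nat -> (dT (l1 j) (l2 b) <= E)%nat ->
    (Z.of_nat (2 * E + kappa + 1 + Z.to_nat (Z.abs (t1 * t2)) + 2) <= Z.abs (i - j))%Z -> False).
  { intros i j a b Hij Ha Hb Hd.
    apply (no_long_overlap g' h' l1 l2 t1 t2 L1 L2 H1 H2 O1 O2 Hncp (i + Z.of_nat E + 1)%Z
             (kappa + 1 + Z.to_nat (Z.abs (t1 * t2)))); [lia|].
    intros k Hk. apply (overlap T l1 l2 i j a b E L1 L2 Hij Ha Hb). lia. }
  intros i j a b Ha Hb Hd.
  destruct (Z.lt_trichotomy i j) as [Hl|[He|Hg]].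
  - eapply W; eauto.
  - subst. lia.
  - eapply (W j i b a); eauto. lia.
Qed.

End Shift.

Lemma conj_comm (G : Group) (V : Type) (A : action G V) a a0 g v :
  A (conj a g) (A (gmul a (ginv a0)) v) = A (gmul a (ginv a0)) (A (conj a0 g) v).
Proof.
  rewrite !act_conj, !actM, !act_invl. reflexivity.
Qed.

Lemma line_auto (G : Group) (T : tree) (A : action G T) c l :
  by_automorphisms (@tadj T) A -> line T l -> line T (fun k => A c (l k)).
Proof.
  intros HA [L1 L2]. split.
  - intros k. apply HA. apply L1.
  - intros k Hk. apply act_inj in Hk. apply (L2 k Hk).
Qed.

Lemma axis_data (G : Group) (T : tree) (A : action G T) g a alpha :
  by_automorphisms (@tadj T) A -> loxodromic A g -> is_axis A (conj a g) alpha ->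
  exists l tau, line T l /\ tau <> 0%Z /\ (forall k, A (conj a g) (l k) = l (k + tau)%Z) /\
    (forall p, alpha p <-> on_line l p).
Proof.
  intros HA Hl [l [Hadj [Hr [Hi [_ Hal]]]]].
  assert (L : line T l) by (split; auto).
  destruct (shift_exists G T A HA (conj a g) l L Hi (lox_nofix G T A g a Hl)
              (lox_noinv G T A HA g a Hl)) as [tau [Ht Hs]].
  exists l, tau. auto.
Qed.

Lemma shift_abs (G : Group) (T : tree) (A : action G T) f l tau :
  line T l -> (forall k, A f (l k) = l (k + tau)%Z) -> forall k, dT (l k) (A f (l k)) = Z.to_nat (Z.abs tau).
Proof.
  intros L H k. rewrite H, line_dist by auto. f_equal. lia.
Qed.

Lemma transfer (G : Group) (T : tree) (A : action G T) g a a0 l l0 tau tau0 :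
  by_automorphisms (@tadj T) A -> line T l -> line T l0 -> tau0 <> 0%Z ->
  (forall k, A (conj a g) (l k) = l (k + tau)%Z) ->
  (forall k, A (conj a0 g) (l0 k) = l0 (k + tau0)%Z) ->
  (forall k, exists c, A (gmul a (ginv a0)) (l0 k) = l c) /\ Z.abs tau = Z.abs tau0.
Proof.
  intros HA L L0 H0 Hs Hs0.
  assert (Hsub : forall k, exists c, A (gmul a (ginv a0)) (l0 k) = l c).
  { apply (axis_unique G T A HA (conj a g) l _ tau tau0 L (line_auto G T A _ l0 HA L0) H0 Hs).
    intros k. rewrite conj_comm, Hs0. reflexivity. }
  split; auto.
  destruct (Hsub 0%Z) as [c1 Hc1].
  pose proof (shift_abs G T A _ l tau L Hs c1) as D1.
  pose proof (shift_abs G T A _ l0 tau0 L0 Hs0 0%Z) as D0.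
  rewrite <- Hc1, conj_comm, dT_auto in D1 by auto. lia.
Qed.

Theorem lemma2p7
  (G : Group) (T : tree) (tact : action G T)
  (X : graph) (xact : action G X) (pi : X -> TPt T) (kappa : nat) (g h : G) :
  torsion_free G ->
  by_automorphisms (@tadj T) tact ->
  acylindrical tact kappa ->
  connected (@adj X) ->
  by_automorphisms (@adj X) xact ->
  (forall x, tpt_wf (pi x)) ->
  (forall (a : G) (x : X), tdist (pi (xact a x)) (tpact tact a (pi x)) = 0) ->
  (forall x y : X, tdist (pi x) (pi y) <= INR (gdist (@adj X) x y)) ->
  loxodromic tact g -> loxodromic tact h ->
  ~ common_nontrivial_power g h ->
  forall eps : R, 0 < eps ->
  exists K : R,
    forall a b : G,
    ~ common_nontrivial_power (conj a g) (conj b h) ->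
    forall (alpha_g alpha_h : TPt T -> Prop),
    is_axis tact (conj a g) alpha_g -> is_axis tact (conj b h) alpha_h ->
    forall x0 y0 : X,
    alpha_g (pi x0) ->
    (forall x : X, alpha_g (pi x) ->
       (gdist (@adj X) (xact (conj a g) x0) x0 <= gdist (@adj X) (xact (conj a g) x) x)%nat) ->
    alpha_h (pi y0) ->
    forall m m' : Z,
    in_nbhd_orbit xact eps (conj a g) x0 (xact (gpow (conj b h) m) y0) ->
    in_nbhd_orbit xact eps (conj a g) x0 (xact (gpow (conj b h) m') y0) ->
    INR (gdist (@adj X) (xact (gpow (conj b h) m) y0) (xact (gpow (conj b h) m') y0)) <= K.
Proof.
  intros Htf HA Hacyl Hconn Hxaut Hwf Heq Hlip Hlg Hlh Hncp eps Heps.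
  set (dX := gdist (@adj X)).
  assert (XA : forall a x y, dX (xact a x) (xact a y) = dX x y).
  { intros a x y. apply (gdist_auto _ _ Hconn (xact a) (xact (ginv a))).
    - intros u v. apply Hxaut.
    - intros; apply act_invl.
    - intros; apply act_invr. }
  assert (Xsym : forall x y, dX x y = dX y x).
  { intros. apply gdist_sym. apply adj_sym. exact Hconn. }
  assert (Xtri : forall x y z, (dX x z <= dX x y + dX y z)%nat).
  { intros. apply gdist_tri. exact Hconn. }
  assert (Bs : forall f x, (dT (base T (pi (xact f x))) (tact f (base T (pi x))) <= 2)%nat).
  { intros f x. pose proof (base_close T _ _ (Hwf (xact f x)) (tpact_wf T G tact HA f _ (Hwf x))) as H.
    rewrite Heq, base_tpact in H. apply INR_le. simpl. lra. }
  destruct (archimed eps) as [Ar1 _].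
  assert (Hup : (0 < up eps)%Z) by (apply lt_0_IZR; lra).
  set (e := Z.to_nat (up eps)).
  assert (He : eps <= INR e).
  { unfold e. rewrite INR_IZR_INZ, Z2Nat.id by lia. lra. }
  destruct (classic (exists a0 al0 xs, is_axis tact (conj a0 g) al0 /\ al0 (pi xs)))
    as [[a0 [al0 [xs [Hax0 Hxs]]]]|Hno];
    [| exists 0; intros a b _ alg alh Haxg _ x0 y0 Hx0; exfalso; apply Hno; eauto].
  destruct (classic (exists b0 be0, is_axis tact (conj b0 h) be0)) as [[b0 [be0 Hbx0]]|Hnoh];
    [| exists 0; intros a b _ alg alh _ Haxh; exfalso; apply Hnoh; eauto].
  destruct (axis_data G T tact g a0 al0 HA Hlg Hax0) as [l0 [t0 [L0 [T0 [S0 I0]]]]].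
  destruct (axis_data G T tact h b0 be0 HA Hlh Hbx0) as [k0 [s0 [K0 [U0 [R0 J0]]]]].
  set (D0 := dX (xact (conj a0 g) xs) xs).
  set (E := (e + 6)%nat).
  set (Nmax := (2 * E + kappa + 1 + Z.to_nat (Z.abs t0) * Z.to_nat (Z.abs s0) + 2)%nat).
  exists (INR (2 * e + Nmax * D0)).
  intros a b Hncp' alg alh Haxg Haxh x0 y0 Hx0 Hmin Hy0 m m' Hm Hm'.
  destruct (axis_data G T tact g a alg HA Hlg Haxg) as [l1 [t1 [L1 [T1 [S1 I1]]]]].
  destruct (axis_data G T tact h b alh HA Hlh Haxh) as [l2 [t2 [L2 [T2 [S2 I2]]]]].
  destruct (transfer G T tact g a a0 l1 l0 t1 t0 HA L1 L0 T0 S1 S0) as [Sub1 Ab1].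
  destruct (transfer G T tact h b b0 l2 k0 t2 s0 HA L2 K0 U0 S2 R0) as [_ Ab2].
  set (g' := conj a g) in *. set (h' := conj b h) in *.
  set (c := gmul a (ginv a0)).
  assert (HD : (dX (xact g' x0) x0 <= D0)%nat).
  { assert (Hon : alg (pi (xact c xs))).
    { apply I1. apply (tdist0_online T l1 _ (tpact tact c (pi xs)) (Hwf _)
                       (tpact_wf T G tact HA c _ (Hwf xs)) (Heq c xs)).
      apply (online_sub T l1 (fun k => tact c (l0 k))); auto.
      apply line_auto; auto.
      apply online_tpact. apply I0. exact Hxs. }
    pose proof (Hmin _ Hon) as Hm0. fold dX in Hm0.
    unfold g', c in Hm0. rewrite conj_comm, XA in Hm0. exact Hm0. }
  set (F := fun k => xact (gpow g' k) x0).
  assert (Fstep : forall k, dX (F (k + 1)%Z) (F k) = dX (xact g' x0) x0).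
  { intros k. unfold F. rewrite gpow_succ, gpow_comm, actM, XA. reflexivity. }
  assert (Fn : forall (N : nat) j, (dX (F (j + Z.of_nat N)%Z) (F j) <= N * dX (xact g' x0) x0)%nat).
  { induction N; intros j.
    - simpl. replace (j + 0)%Z with j by lia. unfold dX. rewrite gdist_refl; auto.
    - pose proof (Xtri (F (j + Z.of_nat (S N))%Z) (F (j + Z.of_nat N)%Z) (F j)).
      pose proof (Fstep (j + Z.of_nat N)%Z) as Hs.
      replace (j + Z.of_nat N + 1)%Z with (j + Z.of_nat (S N))%Z in Hs by lia.
      specialize (IHN j). rewrite Nat.mul_succ_l. lia. }
  assert (Fd : forall n n', (dX (F n) (F n') <= Z.to_nat (Z.abs (n - n')) * D0)%nat).
  { intros n n'.
    assert (W : forall n n', (n' <= n)%Z -> (dX (F n) (F n') <= Z.to_nat (Z.abs (n - n')) * D0)%nat).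
    { intros p q Hpq. pose proof (Fn (Z.to_nat (p - q)) q) as H.
      rewrite Z2Nat.id in H by lia. replace (q + (p - q))%Z with p in H by lia.
      replace (Z.abs (p - q)) with (p - q)%Z by lia.
      apply (Nat.le_trans _ _ _ H). apply Nat.mul_le_mono_l. exact HD. }
    destruct (Z.le_gt_cases n' n). apply W; auto.
    rewrite Xsym. replace (Z.abs (n - n')) with (Z.abs (n' - n)) by lia. apply W. lia. }
  destruct (online_base T l1 _ (proj1 (I1 _) Hx0)) as [c0 Hc0].
  destruct (online_base T l2 _ (proj1 (I2 _) Hy0)) as [d0 Hd0].
  assert (Vb : forall n mm, (dX (xact (gpow h' mm) y0) (F n) <= e)%nat ->
     (dT (l1 (c0 + n * t1)%Z) (l2 (d0 + mm * t2)%Z) <= E)%nat).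
  { intros n mm Hd.
    pose proof (base_close T _ _ (Hwf (xact (gpow h' mm) y0)) (Hwf (F n))) as H1.
    pose proof (Hlip (xact (gpow h' mm) y0) (F n)) as H2.
    apply le_INR in Hd. fold dX in H2.
    assert (H3 : (dT (base T (pi (xact (gpow h' mm) y0))) (base T (pi (F n))) <= e + 2)%nat).
    { apply INR_le. rewrite plus_INR. simpl (INR 2). lra. }
    pose proof (Bs (gpow h' mm) y0) as B1. rewrite Hd0, (orbit_gen G T tact h' l2 t2 S2) in B1.
    pose proof (Bs (gpow g' n) x0) as B2. rewrite Hc0, (orbit_gen G T tact g' l1 t1 S1) in B2.
    fold (F n) in B2.
    pose proof (dT_tri T (l1 (c0 + n * t1)%Z) (base T (pi (F n))) (l2 (d0 + mm * t2)%Z)).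
    pose proof (dT_tri T (base T (pi (F n))) (base T (pi (xact (gpow h' mm) y0))) (l2 (d0 + mm * t2)%Z)).
    pose proof (dT_sym T (l1 (c0 + n * t1)%Z) (base T (pi (F n)))).
    pose proof (dT_sym T (base T (pi (F n))) (base T (pi (xact (gpow h' mm) y0)))).
    unfold E. lia. }
  assert (Ee : forall x y, INR (dX x y) <= eps -> (dX x y <= e)%nat).
  { intros x y Hxy. apply INR_le. lra. }
  destruct Hm as [n Hn]. destruct Hm' as [n' Hn'].
  fold dX in Hn, Hn'. apply Ee in Hn. apply Ee in Hn'.
  fold (F n) in Hn. fold (F n') in Hn'.
  pose proof (Vb n m Hn) as V1. pose proof (Vb n' m' Hn') as V2.
  assert (Hgap : (Z.abs ((c0 + n * t1) - (c0 + n' * t1)) < Z.of_nat Nmax)%Z).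
  { destruct (Z.lt_ge_cases (Z.abs ((c0 + n * t1) - (c0 + n' * t1))) (Z.of_nat Nmax)); auto.
    exfalso.
    apply (big_gap G T tact kappa Hacyl g' h' l1 l2 t1 t2 L1 L2 T1 T2 S1 S2 Hncp' E _ _ _ _ V1 V2).
    assert (Z.to_nat (Z.abs (t1 * t2)) = (Z.to_nat (Z.abs t0) * Z.to_nat (Z.abs s0))%nat).
    { rewrite Z.abs_mul, Ab1, Ab2, Z2Nat.inj_mul by lia. reflexivity. }
    unfold Nmax in H. lia. }
  assert (Hnn : (Z.to_nat (Z.abs (n - n')) <= Nmax)%nat).
  { replace ((c0 + n * t1) - (c0 + n' * t1))%Z with ((n - n') * t1)%Z in Hgap by ring.
    rewrite Z.abs_mul in Hgap. nia. }
  apply le_INR.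
  pose proof (Xtri (xact (gpow h' m) y0) (F n) (xact (gpow h' m') y0)).
  pose proof (Xtri (F n) (F n') (xact (gpow h' m') y0)).
  pose proof (Fd n n').
  pose proof (Xsym (F n') (xact (gpow h' m') y0)).
  fold dX.
  assert (Z.to_nat (Z.abs (n - n')) * D0 <= Nmax * D0)%nat by (apply Nat.mul_le_mono_r; auto).
  lia.
Qed.
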